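(* Let $Q$ be an automorphic loop and let $J:Q\to Q$, $x\mapsto x^{-1}$, be the inversion map. Then $J$ lies in $N_{\mathrm{Sym}(Q)}(\mathrm{Mlt}(Q))\cap C_{\mathrm{Sym}(Q)}(\mathrm{Inn}(Q))$, i.e. $J$ normalizes $\mathrm{Mlt}(Q)$ and centralizes $\mathrm{Inn}(Q)$ in the symmetric group on $Q$.
   Context: A loop is a set with a binary operation in which left and right division are uniquely solvable and which has a neutral element $1$. $R_a:x\mapsto xa$, $L_a:x\mapsto ax$; $\mathrm{Mlt}(Q)=\langle R_x,L_x\mid x\in Q\rangle$; $\mathrm{Inn}(Q)$ is the stabilizer of $1$ in $\mathrm{Mlt}(Q)$. $Q$ is automorphic if $\mathrm{Inn}(Q)\le\mathrm{Aut}(Q)$. Automorphic loops are power-associative, so every element $x$ has a two-sided inverse $x^{-1}$. *)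

(* Defs.v *)
From Stdlib Require Import ssreflect ssrfun.

(* A loop, in the equational (quasigroup-with-identity) presentation:
   left/right division are uniquely solvable, witnessed by the operations
   ldiv (x \ y = the unique z with x*z = y) and rdiv (y / x = the unique z
   with z*x = y). *)
Record loop := Loop {
  carrier :> Type;
  mul : carrier -> carrier -> carrier;
  one : carrier;
  ldiv : carrier -> carrier -> carrier;
  rdiv : carrier -> carrier -> carrier;
  mulKl : forall x y, ldiv x (mul x y) = y;
  mulKVl : forall x y, mul x (ldiv x y) = y;
  mulKr : forall x y, rdiv (mul y x) x = y;
  mulKVr : forall x y, mul (rdiv y x) x = y;
  mul1x : forall x, mul one x = x;
  mulx1 : forall x, mul x one = x
}.

Section LoopDefs.
Variable Q : loop.

Definition Rt (a : Q) : Q -> Q := fun x => mul Q x a.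
Definition Lt (a : Q) : Q -> Q := fun x => mul Q a x.
Definition Rinv (a : Q) : Q -> Q := fun x => rdiv Q x a.
Definition Linv (a : Q) : Q -> Q := fun x => ldiv Q a x.

Inductive mlt_word : (Q -> Q) -> Prop :=
| mw_id : mlt_word id
| mw_R a f : mlt_word f -> mlt_word (Rt a \o f)
| mw_Rinv a f : mlt_word f -> mlt_word (Rinv a \o f)
| mw_L a f : mlt_word f -> mlt_word (Lt a \o f)
| mw_Linv a f : mlt_word f -> mlt_word (Linv a \o f).

Definition Mlt (f : Q -> Q) : Prop :=
  exists g, mlt_word g /\ forall x, f x = g x.

Definition Inn (f : Q -> Q) : Prop := Mlt f /\ f (one Q) = one Q.

Definition is_aut (f : Q -> Q) : Prop :=
  bijective f /\ forall x y, f (mul Q x y) = mul Q (f x) (f y).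

Definition automorphic : Prop := forall f, Inn f -> is_aut f.

(* inversion map x |-> x^{-1}; we take the right inverse x \ 1, which in an
   automorphic loop is the two-sided inverse *)
Definition Jinv (x : Q) : Q := ldiv Q x (one Q).

End LoopDefs.

(* Main.v *)
Require Import Defs.
From Stdlib Require Import ssreflect ssrfun.

Definition Tm (Q : loop) (x y : Q) : Q := ldiv Q x (mul Q y x).
Definition Lm (Q : loop) (x y z : Q) : Q := ldiv Q (mul Q y x) (mul Q y (mul Q x z)).

Lemma u6 (Q : loop) (hT : forall x y z : Q, Tm Q x (mul Q y z) = mul Q (Tm Q x y) (Tm Q x z)) (hL : forall x y z w : Q, Lm Q x y (mul Q z w) = mul Q (Lm Q x y z) (Lm Q x y w)) (v0 : carrier Q) (v1 : carrier Q) : (mul Q (rdiv Q v0 v1) v1) = v0.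
Proof. exact ((mulKVr Q v1 v0)). Qed.

Lemma u4 (Q : loop) (hT : forall x y z : Q, Tm Q x (mul Q y z) = mul Q (Tm Q x y) (Tm Q x z)) (hL : forall x y z w : Q, Lm Q x y (mul Q z w) = mul Q (Lm Q x y z) (Lm Q x y w)) (v0 : carrier Q) (v1 : carrier Q) : (ldiv Q v0 (mul Q v0 v1)) = v1.
Proof. exact ((mulKl Q v0 v1)). Qed.

Lemma u10 (Q : loop) (hT : forall x y z : Q, Tm Q x (mul Q y z) = mul Q (Tm Q x y) (Tm Q x z)) (hL : forall x y z w : Q, Lm Q x y (mul Q z w) = mul Q (Lm Q x y z) (Lm Q x y w)) (v0 : carrier Q) (v1 : carrier Q) : (ldiv Q (rdiv Q v0 v1) v0) = v1.
Proof. exact ((eq_trans (f_equal (fun H : carrier Q => (ldiv Q (rdiv Q v0 v1) H)) (eq_sym (u6 Q hT hL v0 v1))) (u4 Q hT hL (rdiv Q v0 v1) v1))). Qed.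

Lemma u12 (Q : loop) (hT : forall x y z : Q, Tm Q x (mul Q y z) = mul Q (Tm Q x y) (Tm Q x z)) (hL : forall x y z w : Q, Lm Q x y (mul Q z w) = mul Q (Lm Q x y z) (Lm Q x y w)) (v0 : carrier Q) (v1 : carrier Q) : (ldiv Q v0 (mul Q v1 v0)) = (Tm Q v0 v1).
Proof. exact (((@eq_refl _ (Tm Q v0 v1)))). Qed.

Lemma u0 (Q : loop) (hT : forall x y z : Q, Tm Q x (mul Q y z) = mul Q (Tm Q x y) (Tm Q x z)) (hL : forall x y z w : Q, Lm Q x y (mul Q z w) = mul Q (Lm Q x y z) (Lm Q x y w)) (v0 : carrier Q) : (mul Q (one Q) v0) = v0.
Proof. exact ((mul1x Q v0)). Qed.

Lemma u1 (Q : loop) (hT : forall x y z : Q, Tm Q x (mul Q y z) = mul Q (Tm Q x y) (Tm Q x z)) (hL : forall x y z w : Q, Lm Q x y (mul Q z w) = mul Q (Lm Q x y z) (Lm Q x y w)) (v0 : carrier Q) : (mul Q v0 (one Q)) = v0.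
Proof. exact ((mulx1 Q v0)). Qed.

Lemma u5 (Q : loop) (hT : forall x y z : Q, Tm Q x (mul Q y z) = mul Q (Tm Q x y) (Tm Q x z)) (hL : forall x y z w : Q, Lm Q x y (mul Q z w) = mul Q (Lm Q x y z) (Lm Q x y w)) (v0 : carrier Q) : (ldiv Q v0 v0) = (one Q).
Proof. exact ((eq_trans (f_equal (fun H : carrier Q => (ldiv Q v0 H)) (eq_sym (u1 Q hT hL v0))) (u4 Q hT hL v0 (one Q)))). Qed.

Lemma u14 (Q : loop) (hT : forall x y z : Q, Tm Q x (mul Q y z) = mul Q (Tm Q x y) (Tm Q x z)) (hL : forall x y z w : Q, Lm Q x y (mul Q z w) = mul Q (Lm Q x y z) (Lm Q x y w)) (v0 : carrier Q) : (Tm Q v0 (one Q)) = (one Q).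
Proof. exact ((eq_trans (eq_sym (u12 Q hT hL v0 (one Q))) (eq_trans (f_equal (fun H : carrier Q => (ldiv Q v0 H)) (u0 Q hT hL v0)) (u5 Q hT hL v0)))). Qed.

Lemma u21 (Q : loop) (hT : forall x y z : Q, Tm Q x (mul Q y z) = mul Q (Tm Q x y) (Tm Q x z)) (hL : forall x y z w : Q, Lm Q x y (mul Q z w) = mul Q (Lm Q x y z) (Lm Q x y w)) (v0 : carrier Q) (v1 : carrier Q) (v2 : carrier Q) : (mul Q (Tm Q v0 v1) (Tm Q v0 v2)) = (Tm Q v0 (mul Q v1 v2)).
Proof. exact ((eq_sym (hT v0 v1 v2))). Qed.

Lemma u13 (Q : loop) (hT : forall x y z : Q, Tm Q x (mul Q y z) = mul Q (Tm Q x y) (Tm Q x z)) (hL : forall x y z w : Q, Lm Q x y (mul Q z w) = mul Q (Lm Q x y z) (Lm Q x y w)) (v0 : carrier Q) : (Tm Q v0 v0) = v0.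
Proof. exact ((eq_trans (eq_sym (u12 Q hT hL v0 v0)) (u4 Q hT hL v0 v0))). Qed.

Lemma u2 (Q : loop) (hT : forall x y z : Q, Tm Q x (mul Q y z) = mul Q (Tm Q x y) (Tm Q x z)) (hL : forall x y z w : Q, Lm Q x y (mul Q z w) = mul Q (Lm Q x y z) (Lm Q x y w)) (v0 : carrier Q) (v1 : carrier Q) : (mul Q v0 (ldiv Q v0 v1)) = v1.
Proof. exact ((mulKVl Q v0 v1)). Qed.

Lemma u16 (Q : loop) (hT : forall x y z : Q, Tm Q x (mul Q y z) = mul Q (Tm Q x y) (Tm Q x z)) (hL : forall x y z w : Q, Lm Q x y (mul Q z w) = mul Q (Lm Q x y z) (Lm Q x y w)) (v0 : carrier Q) (v1 : carrier Q) : (mul Q v0 (Tm Q v0 v1)) = (mul Q v1 v0).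
Proof. exact ((eq_trans (f_equal (fun H : carrier Q => (mul Q v0 H)) (eq_sym (u12 Q hT hL v0 v1))) (u2 Q hT hL v0 (mul Q v1 v0)))). Qed.

Lemma u22 (Q : loop) (hT : forall x y z : Q, Tm Q x (mul Q y z) = mul Q (Tm Q x y) (Tm Q x z)) (hL : forall x y z w : Q, Lm Q x y (mul Q z w) = mul Q (Lm Q x y z) (Lm Q x y w)) (v0 : carrier Q) (v1 : carrier Q) : (Tm Q v1 (mul Q v1 v0)) = (mul Q v0 v1).
Proof. exact ((eq_trans (eq_sym (u21 Q hT hL v1 v1 v0)) (eq_trans (f_equal (fun H : carrier Q => (mul Q H (Tm Q v1 v0))) (u13 Q hT hL v1)) (u16 Q hT hL v1 v0)))). Qed.

Lemma u23 (Q : loop) (hT : forall x y z : Q, Tm Q x (mul Q y z) = mul Q (Tm Q x y) (Tm Q x z)) (hL : forall x y z w : Q, Lm Q x y (mul Q z w) = mul Q (Lm Q x y z) (Lm Q x y w)) (v0 : carrier Q) (v1 : carrier Q) : (mul Q (ldiv Q v0 v1) v0) = (Tm Q v0 v1).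
Proof. exact ((eq_trans (eq_sym (u22 Q hT hL (ldiv Q v0 v1) v0)) (f_equal (fun H : carrier Q => (Tm Q v0 H)) (u2 Q hT hL v0 v1)))). Qed.

Lemma u24 (Q : loop) (hT : forall x y z : Q, Tm Q x (mul Q y z) = mul Q (Tm Q x y) (Tm Q x z)) (hL : forall x y z w : Q, Lm Q x y (mul Q z w) = mul Q (Lm Q x y z) (Lm Q x y w)) (v0 : carrier Q) (v1 : carrier Q) : (ldiv Q (ldiv Q v0 v1) (Tm Q v0 v1)) = v0.
Proof. exact ((eq_trans (f_equal (fun H : carrier Q => (ldiv Q (ldiv Q v0 v1) H)) (eq_sym (u23 Q hT hL v0 v1))) (u4 Q hT hL (ldiv Q v0 v1) v0))). Qed.

Lemma u25 (Q : loop) (hT : forall x y z : Q, Tm Q x (mul Q y z) = mul Q (Tm Q x y) (Tm Q x z)) (hL : forall x y z w : Q, Lm Q x y (mul Q z w) = mul Q (Lm Q x y z) (Lm Q x y w)) (v0 : carrier Q) : (ldiv Q (ldiv Q v0 (one Q)) (one Q)) = v0.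
Proof. exact ((eq_trans (f_equal (fun H : carrier Q => (ldiv Q (ldiv Q v0 (one Q)) H)) (eq_sym (u14 Q hT hL v0))) (u24 Q hT hL v0 (one Q)))). Qed.

Lemma u26 (Q : loop) (hT : forall x y z : Q, Tm Q x (mul Q y z) = mul Q (Tm Q x y) (Tm Q x z)) (hL : forall x y z w : Q, Lm Q x y (mul Q z w) = mul Q (Lm Q x y z) (Lm Q x y w)) (v0 : carrier Q) : (ldiv Q v0 (one Q)) = (rdiv Q (one Q) v0).
Proof. exact ((eq_trans (f_equal (fun H : carrier Q => (ldiv Q H (one Q))) (eq_sym (u10 Q hT hL (one Q) v0))) (u25 Q hT hL (rdiv Q (one Q) v0)))). Qed.

Lemma u93 (Q : loop) (hT : forall x y z : Q, Tm Q x (mul Q y z) = mul Q (Tm Q x y) (Tm Q x z)) (hL : forall x y z w : Q, Lm Q x y (mul Q z w) = mul Q (Lm Q x y z) (Lm Q x y w)) (v0 : carrier Q) (v1 : carrier Q) (v2 : carrier Q) : (ldiv Q (mul Q v0 v1) (mul Q v0 (mul Q v1 v2))) = (Lm Q v1 v0 v2).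
Proof. exact (((@eq_refl _ (Lm Q v1 v0 v2)))). Qed.

Lemma u98 (Q : loop) (hT : forall x y z : Q, Tm Q x (mul Q y z) = mul Q (Tm Q x y) (Tm Q x z)) (hL : forall x y z w : Q, Lm Q x y (mul Q z w) = mul Q (Lm Q x y z) (Lm Q x y w)) (v0 : carrier Q) (v1 : carrier Q) : (Lm Q v0 v1 (one Q)) = (one Q).
Proof. exact ((eq_trans (eq_sym (u93 Q hT hL v1 v0 (one Q))) (eq_trans (f_equal (fun H : carrier Q => (ldiv Q (mul Q v1 v0) (mul Q v1 H))) (u1 Q hT hL v0)) (u5 Q hT hL (mul Q v1 v0))))). Qed.

Lemma u417 (Q : loop) (hT : forall x y z : Q, Tm Q x (mul Q y z) = mul Q (Tm Q x y) (Tm Q x z)) (hL : forall x y z w : Q, Lm Q x y (mul Q z w) = mul Q (Lm Q x y z) (Lm Q x y w)) (v0 : carrier Q) (v1 : carrier Q) (v2 : carrier Q) (v3 : carrier Q) : (mul Q (Lm Q v0 v1 v2) (Lm Q v0 v1 v3)) = (Lm Q v0 v1 (mul Q v2 v3)).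
Proof. exact ((eq_sym (hL v0 v1 v2 v3))). Qed.

Lemma u32 (Q : loop) (hT : forall x y z : Q, Tm Q x (mul Q y z) = mul Q (Tm Q x y) (Tm Q x z)) (hL : forall x y z w : Q, Lm Q x y (mul Q z w) = mul Q (Lm Q x y z) (Lm Q x y w)) (v0 : carrier Q) (v1 : carrier Q) : (mul Q (mul Q v0 v1) v0) = (mul Q v0 (mul Q v1 v0)).
Proof. exact ((eq_trans (eq_sym (u16 Q hT hL v0 (mul Q v0 v1))) (f_equal (fun H : carrier Q => (mul Q v0 H)) (u22 Q hT hL v1 v0)))). Qed.

Lemma u38 (Q : loop) (hT : forall x y z : Q, Tm Q x (mul Q y z) = mul Q (Tm Q x y) (Tm Q x z)) (hL : forall x y z w : Q, Lm Q x y (mul Q z w) = mul Q (Lm Q x y z) (Lm Q x y w)) (v0 : carrier Q) (v1 : carrier Q) : (ldiv Q (mul Q v0 v1) (mul Q v0 (mul Q v1 v0))) = v0.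
Proof. exact ((eq_trans (f_equal (fun H : carrier Q => (ldiv Q (mul Q v0 v1) H)) (eq_sym (u32 Q hT hL v0 v1))) (u4 Q hT hL (mul Q v0 v1) v0))). Qed.

Lemma u95 (Q : loop) (hT : forall x y z : Q, Tm Q x (mul Q y z) = mul Q (Tm Q x y) (Tm Q x z)) (hL : forall x y z w : Q, Lm Q x y (mul Q z w) = mul Q (Lm Q x y z) (Lm Q x y w)) (v0 : carrier Q) (v1 : carrier Q) : (Lm Q v0 v1 v1) = v1.
Proof. exact ((eq_trans (eq_sym (u93 Q hT hL v1 v0 v1)) (u38 Q hT hL v1 v0))). Qed.

Lemma u418 (Q : loop) (hT : forall x y z : Q, Tm Q x (mul Q y z) = mul Q (Tm Q x y) (Tm Q x z)) (hL : forall x y z w : Q, Lm Q x y (mul Q z w) = mul Q (Lm Q x y z) (Lm Q x y w)) (v0 : carrier Q) (v1 : carrier Q) (v2 : carrier Q) : (Lm Q v1 v0 (mul Q v0 v2)) = (mul Q v0 (Lm Q v1 v0 v2)).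
Proof. exact ((eq_trans (eq_sym (u417 Q hT hL v1 v0 v0 v2)) (f_equal (fun H : carrier Q => (mul Q H (Lm Q v1 v0 v2))) (u95 Q hT hL v1 v0)))). Qed.

Lemma u420 (Q : loop) (hT : forall x y z : Q, Tm Q x (mul Q y z) = mul Q (Tm Q x y) (Tm Q x z)) (hL : forall x y z w : Q, Lm Q x y (mul Q z w) = mul Q (Lm Q x y z) (Lm Q x y w)) (v0 : carrier Q) (v1 : carrier Q) (v2 : carrier Q) : (mul Q v1 (Lm Q v0 v1 (ldiv Q v1 v2))) = (Lm Q v0 v1 v2).
Proof. exact ((eq_trans (eq_sym (u418 Q hT hL v1 v0 (ldiv Q v1 v2))) (f_equal (fun H : carrier Q => (Lm Q v0 v1 H)) (u2 Q hT hL v1 v2)))). Qed.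

Lemma u431 (Q : loop) (hT : forall x y z : Q, Tm Q x (mul Q y z) = mul Q (Tm Q x y) (Tm Q x z)) (hL : forall x y z w : Q, Lm Q x y (mul Q z w) = mul Q (Lm Q x y z) (Lm Q x y w)) (v0 : carrier Q) (v1 : carrier Q) (v2 : carrier Q) : (Lm Q v1 v0 (ldiv Q v0 v2)) = (ldiv Q v0 (Lm Q v1 v0 v2)).
Proof. exact ((eq_trans (eq_sym (u4 Q hT hL v0 (Lm Q v1 v0 (ldiv Q v0 v2)))) (f_equal (fun H : carrier Q => (ldiv Q v0 H)) (u420 Q hT hL v1 v0 v2)))). Qed.

Lemma u104 (Q : loop) (hT : forall x y z : Q, Tm Q x (mul Q y z) = mul Q (Tm Q x y) (Tm Q x z)) (hL : forall x y z w : Q, Lm Q x y (mul Q z w) = mul Q (Lm Q x y z) (Lm Q x y w)) (v0 : carrier Q) (v1 : carrier Q) (v2 : carrier Q) : (ldiv Q (mul Q v0 v1) (mul Q v0 v2)) = (Lm Q v1 v0 (ldiv Q v1 v2)).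
Proof. exact ((eq_trans (f_equal (fun H : carrier Q => (ldiv Q (mul Q v0 v1) (mul Q v0 H))) (eq_sym (u2 Q hT hL v1 v2))) (u93 Q hT hL v0 v1 (ldiv Q v1 v2)))). Qed.

Lemma u114 (Q : loop) (hT : forall x y z : Q, Tm Q x (mul Q y z) = mul Q (Tm Q x y) (Tm Q x z)) (hL : forall x y z w : Q, Lm Q x y (mul Q z w) = mul Q (Lm Q x y z) (Lm Q x y w)) (v0 : carrier Q) (v1 : carrier Q) (v2 : carrier Q) : (Lm Q v1 v0 (ldiv Q v1 (ldiv Q v0 v2))) = (ldiv Q (mul Q v0 v1) v2).
Proof. exact ((eq_trans (eq_sym (u104 Q hT hL v0 v1 (ldiv Q v0 v2))) (f_equal (fun H : carrier Q => (ldiv Q (mul Q v0 v1) H)) (u2 Q hT hL v0 v2)))). Qed.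

Lemma u8 (Q : loop) (hT : forall x y z : Q, Tm Q x (mul Q y z) = mul Q (Tm Q x y) (Tm Q x z)) (hL : forall x y z w : Q, Lm Q x y (mul Q z w) = mul Q (Lm Q x y z) (Lm Q x y w)) (v0 : carrier Q) (v1 : carrier Q) : (rdiv Q (mul Q v0 v1) v1) = v0.
Proof. exact ((mulKr Q v1 v0)). Qed.

Lemma u618 (Q : loop) (hT : forall x y z : Q, Tm Q x (mul Q y z) = mul Q (Tm Q x y) (Tm Q x z)) (hL : forall x y z w : Q, Lm Q x y (mul Q z w) = mul Q (Lm Q x y z) (Lm Q x y w)) (v0 : carrier Q) (v1 : carrier Q) (v2 : carrier Q) (v3 : carrier Q) : (rdiv Q (Lm Q v0 v1 (mul Q v2 v3)) (Lm Q v0 v1 v3)) = (Lm Q v0 v1 v2).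
Proof. exact ((eq_trans (f_equal (fun H : carrier Q => (rdiv Q H (Lm Q v0 v1 v3))) (eq_sym (u417 Q hT hL v0 v1 v2 v3))) (u8 Q hT hL (Lm Q v0 v1 v2) (Lm Q v0 v1 v3)))). Qed.

Lemma u705 (Q : loop) (hT : forall x y z : Q, Tm Q x (mul Q y z) = mul Q (Tm Q x y) (Tm Q x z)) (hL : forall x y z w : Q, Lm Q x y (mul Q z w) = mul Q (Lm Q x y z) (Lm Q x y w)) (v0 : carrier Q) (v1 : carrier Q) (v2 : carrier Q) (v3 : carrier Q) : (rdiv Q (Lm Q v0 v1 v2) (Lm Q v0 v1 (ldiv Q v3 v2))) = (Lm Q v0 v1 v3).
Proof. exact ((eq_trans (f_equal (fun H : carrier Q => (rdiv Q (Lm Q v0 v1 H) (Lm Q v0 v1 (ldiv Q v3 v2)))) (eq_sym (u2 Q hT hL v3 v2))) (u618 Q hT hL v0 v1 v3 (ldiv Q v3 v2)))). Qed.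

Lemma u1340 (Q : loop) (hT : forall x y z : Q, Tm Q x (mul Q y z) = mul Q (Tm Q x y) (Tm Q x z)) (hL : forall x y z w : Q, Lm Q x y (mul Q z w) = mul Q (Lm Q x y z) (Lm Q x y w)) (v0 : carrier Q) (v1 : carrier Q) (v2 : carrier Q) : (rdiv Q (ldiv Q v0 (Lm Q v1 v0 v2)) (ldiv Q (mul Q v0 v1) v2)) = (Lm Q v1 v0 v1).
Proof. exact ((eq_trans (f_equal (fun H : carrier Q => (rdiv Q H (ldiv Q (mul Q v0 v1) v2))) (eq_sym (u431 Q hT hL v0 v1 v2))) (eq_trans (f_equal (fun H : carrier Q => (rdiv Q (Lm Q v1 v0 (ldiv Q v0 v2)) H)) (eq_sym (u114 Q hT hL v0 v1 v2))) (u705 Q hT hL v1 v0 (ldiv Q v0 v2) v1)))). Qed.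

Lemma u1341 (Q : loop) (hT : forall x y z : Q, Tm Q x (mul Q y z) = mul Q (Tm Q x y) (Tm Q x z)) (hL : forall x y z w : Q, Lm Q x y (mul Q z w) = mul Q (Lm Q x y z) (Lm Q x y w)) (v0 : carrier Q) (v1 : carrier Q) : (rdiv Q (rdiv Q (one Q) v0) (rdiv Q (one Q) (mul Q v0 v1))) = (Lm Q v1 v0 v1).
Proof. exact ((eq_trans (f_equal (fun H : carrier Q => (rdiv Q (rdiv Q (one Q) v0) H)) (eq_sym (u26 Q hT hL (mul Q v0 v1)))) (eq_trans (f_equal (fun H : carrier Q => (rdiv Q H (ldiv Q (mul Q v0 v1) (one Q)))) (eq_sym (u26 Q hT hL v0))) (eq_trans (f_equal (fun H : carrier Q => (rdiv Q (ldiv Q v0 H) (ldiv Q (mul Q v0 v1) (one Q)))) (eq_sym (u98 Q hT hL v1 v0))) (u1340 Q hT hL v0 v1 (one Q)))))). Qed.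

Lemma u105 (Q : loop) (hT : forall x y z : Q, Tm Q x (mul Q y z) = mul Q (Tm Q x y) (Tm Q x z)) (hL : forall x y z w : Q, Lm Q x y (mul Q z w) = mul Q (Lm Q x y z) (Lm Q x y w)) (v0 : carrier Q) (v1 : carrier Q) : (ldiv Q (mul Q v0 v1) v0) = (Lm Q v1 v0 (rdiv Q (one Q) v1)).
Proof. exact ((eq_trans (f_equal (fun H : carrier Q => (ldiv Q (mul Q v0 v1) H)) (eq_sym (u1 Q hT hL v0))) (eq_trans (u104 Q hT hL v0 v1 (one Q)) (f_equal (fun H : carrier Q => (Lm Q v1 v0 H)) (u26 Q hT hL v1))))). Qed.

Lemma u617 (Q : loop) (hT : forall x y z : Q, Tm Q x (mul Q y z) = mul Q (Tm Q x y) (Tm Q x z)) (hL : forall x y z w : Q, Lm Q x y (mul Q z w) = mul Q (Lm Q x y z) (Lm Q x y w)) (v0 : carrier Q) (v1 : carrier Q) (v2 : carrier Q) (v3 : carrier Q) : (ldiv Q (Lm Q v0 v1 v2) (Lm Q v0 v1 (mul Q v2 v3))) = (Lm Q v0 v1 v3).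
Proof. exact ((eq_trans (f_equal (fun H : carrier Q => (ldiv Q (Lm Q v0 v1 v2) H)) (eq_sym (u417 Q hT hL v0 v1 v2 v3))) (u4 Q hT hL (Lm Q v0 v1 v2) (Lm Q v0 v1 v3)))). Qed.

Lemma u670 (Q : loop) (hT : forall x y z : Q, Tm Q x (mul Q y z) = mul Q (Tm Q x y) (Tm Q x z)) (hL : forall x y z w : Q, Lm Q x y (mul Q z w) = mul Q (Lm Q x y z) (Lm Q x y w)) (v0 : carrier Q) (v1 : carrier Q) (v2 : carrier Q) (v3 : carrier Q) : (ldiv Q (Lm Q v0 v1 v2) (Lm Q v0 v1 v3)) = (Lm Q v0 v1 (ldiv Q v2 v3)).
Proof. exact ((eq_trans (f_equal (fun H : carrier Q => (ldiv Q (Lm Q v0 v1 v2) (Lm Q v0 v1 H))) (eq_sym (u2 Q hT hL v2 v3))) (u617 Q hT hL v0 v1 v2 (ldiv Q v2 v3)))). Qed.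

Lemma u672 (Q : loop) (hT : forall x y z : Q, Tm Q x (mul Q y z) = mul Q (Tm Q x y) (Tm Q x z)) (hL : forall x y z w : Q, Lm Q x y (mul Q z w) = mul Q (Lm Q x y z) (Lm Q x y w)) (v0 : carrier Q) (v1 : carrier Q) (v2 : carrier Q) : (Lm Q v0 v1 (rdiv Q (one Q) v2)) = (rdiv Q (one Q) (Lm Q v0 v1 v2)).
Proof. exact ((eq_trans (f_equal (fun H : carrier Q => (Lm Q v0 v1 H)) (eq_sym (u26 Q hT hL v2))) (eq_trans (eq_sym (u670 Q hT hL v0 v1 v2 (one Q))) (eq_trans (f_equal (fun H : carrier Q => (ldiv Q (Lm Q v0 v1 v2) H)) (u98 Q hT hL v0 v1)) (u26 Q hT hL (Lm Q v0 v1 v2)))))). Qed.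

Lemma u673 (Q : loop) (hT : forall x y z : Q, Tm Q x (mul Q y z) = mul Q (Tm Q x y) (Tm Q x z)) (hL : forall x y z w : Q, Lm Q x y (mul Q z w) = mul Q (Lm Q x y z) (Lm Q x y w)) (v0 : carrier Q) (v1 : carrier Q) : (ldiv Q (mul Q v0 v1) v0) = (rdiv Q (one Q) (Lm Q v1 v0 v1)).
Proof. exact ((eq_trans (u105 Q hT hL v0 v1) (u672 Q hT hL v1 v0 v1))). Qed.

Lemma u677 (Q : loop) (hT : forall x y z : Q, Tm Q x (mul Q y z) = mul Q (Tm Q x y) (Tm Q x z)) (hL : forall x y z w : Q, Lm Q x y (mul Q z w) = mul Q (Lm Q x y z) (Lm Q x y w)) (v0 : carrier Q) (v1 : carrier Q) : (rdiv Q (one Q) (ldiv Q (mul Q v0 v1) v0)) = (Lm Q v1 v0 v1).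
Proof. exact ((eq_trans (eq_sym (u26 Q hT hL (ldiv Q (mul Q v0 v1) v0))) (eq_trans (f_equal (fun H : carrier Q => (ldiv Q H (one Q))) (u673 Q hT hL v0 v1)) (u10 Q hT hL (one Q) (Lm Q v1 v0 v1))))). Qed.

Lemma u691 (Q : loop) (hT : forall x y z : Q, Tm Q x (mul Q y z) = mul Q (Tm Q x y) (Tm Q x z)) (hL : forall x y z w : Q, Lm Q x y (mul Q z w) = mul Q (Lm Q x y z) (Lm Q x y w)) (v0 : carrier Q) (v1 : carrier Q) : (ldiv Q v1 (Lm Q (ldiv Q v1 v0) v1 v0)) = (rdiv Q (one Q) (ldiv Q v0 v1)).
Proof. exact ((eq_trans (eq_sym (u431 Q hT hL v1 (ldiv Q v1 v0) v0)) (eq_trans (eq_sym (u677 Q hT hL v1 (ldiv Q v1 v0))) (f_equal (fun H : carrier Q => (rdiv Q (one Q) (ldiv Q H v1))) (u2 Q hT hL v1 v0))))). Qed.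

Lemma u702 (Q : loop) (hT : forall x y z : Q, Tm Q x (mul Q y z) = mul Q (Tm Q x y) (Tm Q x z)) (hL : forall x y z w : Q, Lm Q x y (mul Q z w) = mul Q (Lm Q x y z) (Lm Q x y w)) (v0 : carrier Q) (v1 : carrier Q) : (mul Q v0 (rdiv Q (one Q) (ldiv Q v1 v0))) = (Lm Q (ldiv Q v0 v1) v0 v1).
Proof. exact ((eq_trans (f_equal (fun H : carrier Q => (mul Q v0 H)) (eq_sym (u691 Q hT hL v1 v0))) (u2 Q hT hL v0 (Lm Q (ldiv Q v0 v1) v0 v1)))). Qed.

Lemma u17 (Q : loop) (hT : forall x y z : Q, Tm Q x (mul Q y z) = mul Q (Tm Q x y) (Tm Q x z)) (hL : forall x y z w : Q, Lm Q x y (mul Q z w) = mul Q (Lm Q x y z) (Lm Q x y w)) (v0 : carrier Q) (v1 : carrier Q) : (Tm Q v0 (rdiv Q v1 v0)) = (ldiv Q v0 v1).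
Proof. exact ((eq_trans (eq_sym (u12 Q hT hL v0 (rdiv Q v1 v0))) (f_equal (fun H : carrier Q => (ldiv Q v0 H)) (u6 Q hT hL v1 v0)))). Qed.

Lemma u419 (Q : loop) (hT : forall x y z : Q, Tm Q x (mul Q y z) = mul Q (Tm Q x y) (Tm Q x z)) (hL : forall x y z w : Q, Lm Q x y (mul Q z w) = mul Q (Lm Q x y z) (Lm Q x y w)) (v0 : carrier Q) (v1 : carrier Q) (v2 : carrier Q) : (Lm Q v0 v1 (mul Q v2 v1)) = (mul Q (Lm Q v0 v1 v2) v1).
Proof. exact ((eq_trans (eq_sym (u417 Q hT hL v0 v1 v2 v1)) (f_equal (fun H : carrier Q => (mul Q (Lm Q v0 v1 v2) H)) (u95 Q hT hL v0 v1)))). Qed.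

Lemma u430 (Q : loop) (hT : forall x y z : Q, Tm Q x (mul Q y z) = mul Q (Tm Q x y) (Tm Q x z)) (hL : forall x y z w : Q, Lm Q x y (mul Q z w) = mul Q (Lm Q x y z) (Lm Q x y w)) (v0 : carrier Q) (v1 : carrier Q) (v2 : carrier Q) : (mul Q (Lm Q v0 v1 (rdiv Q v2 v1)) v1) = (Lm Q v0 v1 v2).
Proof. exact ((eq_trans (eq_sym (u419 Q hT hL v0 v1 (rdiv Q v2 v1))) (f_equal (fun H : carrier Q => (Lm Q v0 v1 H)) (u6 Q hT hL v2 v1)))). Qed.

Lemma u435 (Q : loop) (hT : forall x y z : Q, Tm Q x (mul Q y z) = mul Q (Tm Q x y) (Tm Q x z)) (hL : forall x y z w : Q, Lm Q x y (mul Q z w) = mul Q (Lm Q x y z) (Lm Q x y w)) (v0 : carrier Q) (v1 : carrier Q) (v2 : carrier Q) : (Lm Q v0 v1 (rdiv Q v2 v1)) = (rdiv Q (Lm Q v0 v1 v2) v1).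
Proof. exact ((eq_trans (eq_sym (u8 Q hT hL (Lm Q v0 v1 (rdiv Q v2 v1)) v1)) (f_equal (fun H : carrier Q => (rdiv Q H v1)) (u430 Q hT hL v0 v1 v2)))). Qed.

Lemma u59 (Q : loop) (hT : forall x y z : Q, Tm Q x (mul Q y z) = mul Q (Tm Q x y) (Tm Q x z)) (hL : forall x y z w : Q, Lm Q x y (mul Q z w) = mul Q (Lm Q x y z) (Lm Q x y w)) (v0 : carrier Q) (v1 : carrier Q) (v2 : carrier Q) : (ldiv Q (Tm Q v0 v1) (Tm Q v0 (mul Q v1 v2))) = (Tm Q v0 v2).
Proof. exact ((eq_trans (f_equal (fun H : carrier Q => (ldiv Q (Tm Q v0 v1) H)) (eq_sym (u21 Q hT hL v0 v1 v2))) (u4 Q hT hL (Tm Q v0 v1) (Tm Q v0 v2)))). Qed.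

Lemma u71 (Q : loop) (hT : forall x y z : Q, Tm Q x (mul Q y z) = mul Q (Tm Q x y) (Tm Q x z)) (hL : forall x y z w : Q, Lm Q x y (mul Q z w) = mul Q (Lm Q x y z) (Lm Q x y w)) (v0 : carrier Q) (v1 : carrier Q) (v2 : carrier Q) : (ldiv Q (Tm Q v0 v1) (Tm Q v0 v2)) = (Tm Q v0 (ldiv Q v1 v2)).
Proof. exact ((eq_trans (f_equal (fun H : carrier Q => (ldiv Q (Tm Q v0 v1) (Tm Q v0 H))) (eq_sym (u2 Q hT hL v1 v2))) (u59 Q hT hL v0 v1 (ldiv Q v1 v2)))). Qed.

Lemma u73 (Q : loop) (hT : forall x y z : Q, Tm Q x (mul Q y z) = mul Q (Tm Q x y) (Tm Q x z)) (hL : forall x y z w : Q, Lm Q x y (mul Q z w) = mul Q (Lm Q x y z) (Lm Q x y w)) (v0 : carrier Q) (v1 : carrier Q) : (Tm Q v0 (rdiv Q (one Q) v1)) = (rdiv Q (one Q) (Tm Q v0 v1)).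
Proof. exact ((eq_trans (f_equal (fun H : carrier Q => (Tm Q v0 H)) (eq_sym (u26 Q hT hL v1))) (eq_trans (eq_sym (u71 Q hT hL v0 v1 (one Q))) (eq_trans (f_equal (fun H : carrier Q => (ldiv Q (Tm Q v0 v1) H)) (u14 Q hT hL v0)) (u26 Q hT hL (Tm Q v0 v1)))))). Qed.

Lemma u72 (Q : loop) (hT : forall x y z : Q, Tm Q x (mul Q y z) = mul Q (Tm Q x y) (Tm Q x z)) (hL : forall x y z w : Q, Lm Q x y (mul Q z w) = mul Q (Lm Q x y z) (Lm Q x y w)) (v0 : carrier Q) (v1 : carrier Q) : (Tm Q v0 (ldiv Q v1 v0)) = (ldiv Q (Tm Q v0 v1) v0).
Proof. exact ((eq_trans (eq_sym (u71 Q hT hL v0 v1 v0)) (f_equal (fun H : carrier Q => (ldiv Q (Tm Q v0 v1) H)) (u13 Q hT hL v0)))). Qed.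

Lemma u585 (Q : loop) (hT : forall x y z : Q, Tm Q x (mul Q y z) = mul Q (Tm Q x y) (Tm Q x z)) (hL : forall x y z w : Q, Lm Q x y (mul Q z w) = mul Q (Lm Q x y z) (Lm Q x y w)) (v0 : carrier Q) (v1 : carrier Q) : (Tm Q v0 (Lm Q v1 v0 (rdiv Q (one Q) v1))) = (ldiv Q (mul Q v1 v0) v0).
Proof. exact ((eq_trans (f_equal (fun H : carrier Q => (Tm Q v0 H)) (eq_sym (u105 Q hT hL v0 v1))) (eq_trans (u72 Q hT hL v0 (mul Q v0 v1)) (f_equal (fun H : carrier Q => (ldiv Q H v0)) (u22 Q hT hL v1 v0))))). Qed.

Lemma u685 (Q : loop) (hT : forall x y z : Q, Tm Q x (mul Q y z) = mul Q (Tm Q x y) (Tm Q x z)) (hL : forall x y z w : Q, Lm Q x y (mul Q z w) = mul Q (Lm Q x y z) (Lm Q x y w)) (v0 : carrier Q) (v1 : carrier Q) : (rdiv Q (one Q) (Tm Q v0 (Lm Q v1 v0 v1))) = (ldiv Q (mul Q v1 v0) v0).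
Proof. exact ((eq_trans (eq_sym (u73 Q hT hL v0 (Lm Q v1 v0 v1))) (eq_trans (f_equal (fun H : carrier Q => (Tm Q v0 H)) (eq_sym (u672 Q hT hL v1 v0 v1))) (u585 Q hT hL v0 v1)))). Qed.

Lemma u697 (Q : loop) (hT : forall x y z : Q, Tm Q x (mul Q y z) = mul Q (Tm Q x y) (Tm Q x z)) (hL : forall x y z w : Q, Lm Q x y (mul Q z w) = mul Q (Lm Q x y z) (Lm Q x y w)) (v0 : carrier Q) (v1 : carrier Q) : (mul Q (ldiv Q (mul Q v0 v1) v1) (Tm Q v1 (Lm Q v0 v1 v0))) = (one Q).
Proof. exact ((eq_trans (f_equal (fun H : carrier Q => (mul Q H (Tm Q v1 (Lm Q v0 v1 v0)))) (eq_sym (u685 Q hT hL v1 v0))) (u6 Q hT hL (one Q) (Tm Q v1 (Lm Q v0 v1 v0))))). Qed.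

Lemma u814 (Q : loop) (hT : forall x y z : Q, Tm Q x (mul Q y z) = mul Q (Tm Q x y) (Tm Q x z)) (hL : forall x y z w : Q, Lm Q x y (mul Q z w) = mul Q (Lm Q x y z) (Lm Q x y w)) (v0 : carrier Q) (v1 : carrier Q) : (mul Q (ldiv Q v0 v1) (ldiv Q v1 (Lm Q (rdiv Q v0 v1) v1 v0))) = (one Q).
Proof. exact ((eq_trans (f_equal (fun H : carrier Q => (mul Q (ldiv Q v0 v1) H)) (eq_sym (u17 Q hT hL v1 (Lm Q (rdiv Q v0 v1) v1 v0)))) (eq_trans (f_equal (fun H : carrier Q => (mul Q (ldiv Q v0 v1) (Tm Q v1 H))) (eq_sym (u435 Q hT hL (rdiv Q v0 v1) v1 v0))) (eq_trans (f_equal (fun H : carrier Q => (mul Q (ldiv Q H v1) (Tm Q v1 (Lm Q (rdiv Q v0 v1) v1 (rdiv Q v0 v1))))) (eq_sym (u6 Q hT hL v0 v1))) (u697 Q hT hL (rdiv Q v0 v1) v1))))). Qed.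

Lemma u815 (Q : loop) (hT : forall x y z : Q, Tm Q x (mul Q y z) = mul Q (Tm Q x y) (Tm Q x z)) (hL : forall x y z w : Q, Lm Q x y (mul Q z w) = mul Q (Lm Q x y z) (Lm Q x y w)) (v0 : carrier Q) (v1 : carrier Q) : (ldiv Q v1 (Lm Q (rdiv Q v0 v1) v1 v0)) = (rdiv Q (one Q) (ldiv Q v0 v1)).
Proof. exact ((eq_trans (eq_sym (u4 Q hT hL (ldiv Q v0 v1) (ldiv Q v1 (Lm Q (rdiv Q v0 v1) v1 v0)))) (eq_trans (f_equal (fun H : carrier Q => (ldiv Q (ldiv Q v0 v1) H)) (u814 Q hT hL v0 v1)) (u26 Q hT hL (ldiv Q v0 v1))))). Qed.

Lemma u816 (Q : loop) (hT : forall x y z : Q, Tm Q x (mul Q y z) = mul Q (Tm Q x y) (Tm Q x z)) (hL : forall x y z w : Q, Lm Q x y (mul Q z w) = mul Q (Lm Q x y z) (Lm Q x y w)) (v0 : carrier Q) (v1 : carrier Q) : (mul Q v0 (rdiv Q (one Q) (ldiv Q v1 v0))) = (Lm Q (rdiv Q v1 v0) v0 v1).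
Proof. exact ((eq_trans (f_equal (fun H : carrier Q => (mul Q v0 H)) (eq_sym (u815 Q hT hL v1 v0))) (u2 Q hT hL v0 (Lm Q (rdiv Q v1 v0) v0 v1)))). Qed.

Lemma u817 (Q : loop) (hT : forall x y z : Q, Tm Q x (mul Q y z) = mul Q (Tm Q x y) (Tm Q x z)) (hL : forall x y z w : Q, Lm Q x y (mul Q z w) = mul Q (Lm Q x y z) (Lm Q x y w)) (v0 : carrier Q) (v1 : carrier Q) : (Lm Q (ldiv Q v1 v0) v1 v0) = (Lm Q (rdiv Q v0 v1) v1 v0).
Proof. exact ((eq_trans (eq_sym (u702 Q hT hL v1 v0)) (u816 Q hT hL v1 v0))). Qed.

Lemma u1344 (Q : loop) (hT : forall x y z : Q, Tm Q x (mul Q y z) = mul Q (Tm Q x y) (Tm Q x z)) (hL : forall x y z w : Q, Lm Q x y (mul Q z w) = mul Q (Lm Q x y z) (Lm Q x y w)) (v0 : carrier Q) (v1 : carrier Q) : (rdiv Q (rdiv Q (one Q) v0) (rdiv Q (one Q) v1)) = (rdiv Q (one Q) (ldiv Q v1 v0)).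
Proof. exact ((eq_trans (f_equal (fun H : carrier Q => (rdiv Q (rdiv Q (one Q) v0) (rdiv Q (one Q) H))) (eq_sym (u2 Q hT hL v0 v1))) (eq_trans (u1341 Q hT hL v0 (ldiv Q v0 v1)) (eq_trans (u431 Q hT hL v0 (ldiv Q v0 v1) v1) (eq_trans (f_equal (fun H : carrier Q => (ldiv Q v0 H)) (u817 Q hT hL v1 v0)) (u815 Q hT hL v1 v0)))))). Qed.

Lemma u1345 (Q : loop) (hT : forall x y z : Q, Tm Q x (mul Q y z) = mul Q (Tm Q x y) (Tm Q x z)) (hL : forall x y z w : Q, Lm Q x y (mul Q z w) = mul Q (Lm Q x y z) (Lm Q x y w)) (v0 : carrier Q) (v1 : carrier Q) : (mul Q (rdiv Q (one Q) (ldiv Q v0 v1)) (rdiv Q (one Q) v0)) = (rdiv Q (one Q) v1).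
Proof. exact ((eq_trans (f_equal (fun H : carrier Q => (mul Q H (rdiv Q (one Q) v0))) (eq_sym (u1344 Q hT hL v1 v0))) (u6 Q hT hL (rdiv Q (one Q) v1) (rdiv Q (one Q) v0)))). Qed.

Lemma u1349 (Q : loop) (hT : forall x y z : Q, Tm Q x (mul Q y z) = mul Q (Tm Q x y) (Tm Q x z)) (hL : forall x y z w : Q, Lm Q x y (mul Q z w) = mul Q (Lm Q x y z) (Lm Q x y w)) (v0 : carrier Q) (v1 : carrier Q) : (mul Q (rdiv Q (one Q) v0) (rdiv Q (one Q) v1)) = (rdiv Q (one Q) (mul Q v1 v0)).
Proof. exact ((eq_trans (f_equal (fun H : carrier Q => (mul Q (rdiv Q (one Q) H) (rdiv Q (one Q) v1))) (eq_sym (u4 Q hT hL v1 v0))) (u1345 Q hT hL v1 (mul Q v1 v0)))). Qed.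

Lemma aaip_core (Q : loop) (hT : forall x y z : Q, Tm Q x (mul Q y z) = mul Q (Tm Q x y) (Tm Q x z)) (hL : forall x y z w : Q, Lm Q x y (mul Q z w) = mul Q (Lm Q x y z) (Lm Q x y w)) (a b : carrier Q) : (ldiv Q (mul Q a b) (one Q)) = (mul Q (ldiv Q b (one Q)) (ldiv Q a (one Q))).
Proof. exact ((eq_trans (u26 Q hT hL (mul Q a b)) (eq_trans (eq_sym (u1349 Q hT hL b a)) (eq_trans (f_equal (fun H : carrier Q => (mul Q (rdiv Q (one Q) b) H)) (eq_sym (u26 Q hT hL a))) (f_equal (fun H : carrier Q => (mul Q H (ldiv Q a (one Q)))) (eq_sym (u26 Q hT hL b))))))). Qed.

Lemma ldiv_self (Q : loop) (x : Q) : ldiv Q x x = one Q.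
Proof. have h := mulKl Q x (one Q). by rewrite mulx1 in h. Qed.

Lemma Tm_inn (Q : loop) (x : Q) : Inn Q (Tm Q x).
Proof.
split.
- exists (Linv Q x \o (Rt Q x \o id)). split.
  + apply: mw_Linv. apply: mw_R. exact: mw_id.
  + by [].
- by rewrite /Tm mul1x ldiv_self.
Qed.

Lemma Lm_inn (Q : loop) (x y : Q) : Inn Q (Lm Q x y).
Proof.
split.
- exists (Linv Q (mul Q y x) \o (Lt Q y \o (Lt Q x \o id))). split.
  + apply: mw_Linv. apply: mw_L. apply: mw_L. exact: mw_id.
  + by [].
- by rewrite /Lm mulx1 ldiv_self.
Qed.

Lemma word_conj (Q : loop)
  (aaip : forall a b : Q, ldiv Q (mul Q a b) (one Q) = mul Q (ldiv Q b (one Q)) (ldiv Q a (one Q)))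
  (invol : forall a : Q, ldiv Q (ldiv Q a (one Q)) (one Q) = a) :
  forall g, mlt_word Q g -> exists g', mlt_word Q g' /\
     forall z, Jinv Q (g (Jinv Q z)) = g' z.
Proof.
move=> g; elim=> {g}.
- exists id; split; first exact: mw_id. move=> z /=. by rewrite /Jinv invol.
- move=> a f _ [g' [Hg' E]]. exists (Lt Q (Jinv Q a) \o g'). split; first exact: mw_L.
  move=> z /=. by rewrite /Rt /Lt /Jinv aaip -E.
- move=> a f _ [g' [Hg' E]]. exists (Linv Q (Jinv Q a) \o g'). split; first exact: mw_Linv.
  move=> z /=. rewrite /Rinv /Linv -E /Jinv.
  set u := f _. set w := rdiv Q u a.
  have hu : u = mul Q w a by rewrite /w mulKVr.
  by rewrite {1}hu aaip mulKl.
- move=> a f _ [g' [Hg' E]]. exists (Rt Q (Jinv Q a) \o g'). split; first exact: mw_R.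
  move=> z /=. by rewrite /Rt /Lt /Jinv aaip -E.
- move=> a f _ [g' [Hg' E]]. exists (Rinv Q (Jinv Q a) \o g'). split; first exact: mw_Rinv.
  move=> z /=. rewrite /Rinv /Linv -E /Jinv.
  set u := f _. set w := ldiv Q a u.
  have hu : u = mul Q a w by rewrite /w mulKVl.
  by rewrite {1}hu aaip mulKr.
Qed.

Theorem corollary2p2 (Q : loop) (HA : automorphic Q) :
  let J := Jinv Q in
  (* J is a two-sided inverse map, and J is an element of Sym(Q) *)
  (forall x : Q, mul Q x (J x) = one Q /\ mul Q (J x) x = one Q) /\
  (exists J' : Q -> Q,
     cancel J J' /\ cancel J' J /\
     (* J normalizes Mlt(Q): J Mlt J^-1 = Mlt *)
     (forall f, Mlt Q f -> Mlt Q (J \o f \o J')) /\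
     (forall f, Mlt Q f -> Mlt Q (J' \o f \o J))) /\
  (* J centralizes Inn(Q) *)
  (forall f, Inn Q f -> forall x, J (f x) = f (J x)).
Proof.
have hT : forall x y z : Q, Tm Q x (mul Q y z) = mul Q (Tm Q x y) (Tm Q x z).
  move=> x y z. have [_ H] := HA _ (Tm_inn Q x). exact: H.
have hL : forall x y z w : Q, Lm Q x y (mul Q z w) = mul Q (Lm Q x y z) (Lm Q x y w).
  move=> x y z w. have [_ H] := HA _ (Lm_inn Q x y). exact: H.
have aaip := aaip_core Q hT hL.
have invol : forall a : Q, ldiv Q (ldiv Q a (one Q)) (one Q) = a := u25 Q hT hL.
have lr : forall a : Q, ldiv Q a (one Q) = rdiv Q (one Q) a := u26 Q hT hL.
have conj := word_conj Q aaip invol.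
have normal : forall f, Mlt Q f -> Mlt Q (Jinv Q \o f \o Jinv Q).
  move=> f [g [Hg E]]. have [g' [Hg' E']] := conj g Hg.
  exists g'; split => // z /=. by rewrite E E'.
move=> J. split; [|split].
- move=> x; split; first exact: mulKVl.
  by rewrite /J /Jinv lr mulKVr.
- exists J. split; [|split; [|split]].
  + move=> x. exact: invol.
  + move=> x. exact: invol.
  + exact: normal.
  + exact: normal.
- move=> f Hf x. have [_ Hm] := HA f Hf. have [_ H1] := Hf.
  rewrite /J /Jinv.
  have h : mul Q (f x) (f (ldiv Q x (one Q))) = one Q by rewrite -Hm mulKVl H1.
  by rewrite -{1}h mulKl.
Qed.
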